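(* Let $V$ be a finite nonempty set, $c\in\mathbb{R}^{P_V}$, $\hat x$ a maximally specific partial function on $P_V$, $U\subseteq V$, $\hat x'=\hat x|_{P_U}$, $c'=c|_{P_U}$, and $ij\in P_V\setminus\operatorname{dom}(\hat x)$. Define $y^+\in\{0,1\}^{P_U}$ by $y^+_e=1$ if $e\notin\operatorname{dom}(\hat x')$ and $c_e\ge0$; $y^+_e=0$ if $e\notin\operatorname{dom}(\hat x')$ and $c_e<0$; $y^+_e=\hat x_e$ if $e\in\operatorname{dom}(\hat x')$. Let $\tau\in\{\tau^{y^+}_{\mathrm{out}},\tau^{y^+}_{\mathrm{in}},\tau^{y^+}_{\mathrm{bd}}\}$ with corresponding sets $P'_{01},P'_{10}$ given in the context (with $y=y^+$). If $y^+\in X_U[\hat x']$, then for every $x\in X_V[\hat x]$: $$\sum_{pq\in\delta(U)}c_{pq}\big(x_{pq}-\tau(x)_{pq}\big)\le\sum_{pq\in P'_{01}}c^-_{pq}+\sum_{pq\in P'_{10}}c^+_{pq}.$$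
   Context: For a finite set $W$, $P_W=\{pq\in W^2\mid p\neq q\}$ and $X_W$ is the set of $x\in\{0,1\}^{P_W}$ with $x_{pq}+x_{qr}-x_{pr}\le1$ for all pairwise distinct $p,q,r\in W$. A partial function $\tilde x$ on $P_W$ is a map from $\operatorname{dom}(\tilde x)\subseteq P_W$ to $\{0,1\}$, $\tilde x^{-1}(b)$ the pairs mapped to $b$, $X_W[\tilde x]=\{x\in X_W\mid x_{pq}=\tilde x_{pq}\ \forall pq\in\operatorname{dom}(\tilde x)\}$; convention $\tilde x_{aa}=1$, $x_{aa}=1$, $y_{aa}=1$ for all $a$. A pair is decided if it has the same value in all completions; $\tilde x$ is maximally specific if $X_W[\tilde x]\ne\emptyset$ and the decided pairs are exactly $\operatorname{dom}(\tilde x)$. $\hat x|_{P_U}$ has domain $\operatorname{dom}(\hat x)\cap P_U$. $\delta(U)=(U\times(V\setminus U))\cup((V\setminus U)\times U)$. For $y\in X_U[\hat x']$ and $x\in X_V[\hat x]$: $\tau^y_{\mathrm{out}}(x)_{pq}$ equals $y_{pq}$ on $P_U$; $0$ on $U\times(V\setminus U)$; on $(V\setminus U)\times U$, $1$ if $\exists r\in U: x_{pr}=1\wedge y_{rq}=1$ and $0$ otherwise; $x_{pq}$ on $P_{V\setminus U}$. $\tau^y_{\mathrm{in}}(x)_{pq}$ equals $y_{pq}$ on $P_U$; $0$ on $(V\setminus U)\times U$; on $U\times(V\setminus U)$, $1$ if $\exists r\in U: y_{pr}=1\wedge x_{rq}=1$ and $0$ otherwise; $x_{pq}$ on $P_{V\setminus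 U}$. $\tau^y_{\mathrm{bd}}(x)_{pq}$ equals $y_{pq}$ on $P_U$; $0$ on $\delta(U)$; $x_{pq}$ on $P_{V\setminus U}$. Sets: for $\tau^y_{\mathrm{out}}$: $P'_{01}=\{pq\in(V\setminus U)\times U\mid\exists r\in U:\hat x_{pr}\ne0\wedge y_{rq}=1\}\setminus\hat x^{-1}(1)$, $P'_{10}=(U\times(V\setminus U))\setminus\hat x^{-1}(0)$; for $\tau^y_{\mathrm{in}}$: $P'_{01}=\{pq\in U\times(V\setminus U)\mid\exists r\in U: y_{pr}=1\wedge\hat x_{rq}\ne0\}\setminus\hat x^{-1}(1)$, $P'_{10}=((V\setminus U)\times U)\setminus\hat x^{-1}(0)$; for $\tau^y_{\mathrm{bd}}$: $P'_{01}=\emptyset$, $P'_{10}=\delta(U)\setminus\hat x^{-1}(0)$. For real $a$: $a^+=\max(a,0)$, $a^-=\max(-a,0)$. *)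

(* Defs.v *)
From mathcomp Require Import all_boot all_order all_algebra.
Set Implicit Arguments. Unset Strict Implicit. Unset Printing Implicit Defensive.
Import Order.TTheory GRing.Theory Num.Theory.
Local Open Scope ring_scope.

Section Defs.
Variable V : finType.

(* A 0/1 vector on pairs is represented by a function x : V -> V -> bool;
   only its values on off-diagonal pairs matter.  The convention x_aa = 1
   is implemented by the accessor [xv]. *)
Definition xv (x : V -> V -> bool) (p q : V) : bool := (p == q) || x p q.

(* A partial function on pairs: None = undefined.  Its domain is the set of
   off-diagonal pairs on which it is defined (values on the diagonal are
   ignored). *)
Definition pfun := V -> V -> option bool.

Definition in_dom (W : {set V}) (xt : pfun) (p q : V) : bool :=
  [&& p \in W, q \in W, p != q & xt p q != None].

Definition inX (W : {set V}) (x : V -> V -> bool) : Prop :=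
  forall p q r, p \in W -> q \in W -> r \in W ->
    p != q -> q != r -> p != r ->
    ((x p q : nat)%:Z + (x q r : nat)%:Z - (x p r : nat)%:Z <= 1)%R.

Definition agree (W : {set V}) (xt : pfun) (x : V -> V -> bool) : Prop :=
  forall p q b, p \in W -> q \in W -> p != q -> xt p q = Some b -> x p q = b.

Definition inXt (W : {set V}) (xt : pfun) (x : V -> V -> bool) : Prop :=
  inX W x /\ agree W xt x.

Definition decided (W : {set V}) (xt : pfun) (p q : V) : Prop :=
  exists b : bool, forall x, inXt W xt x -> x p q = b.

Definition max_specific (W : {set V}) (xt : pfun) : Prop :=
  (exists x, inXt W xt x) /\
  (forall p q, p \in W -> q \in W -> p != q ->
     (decided W xt p q <-> in_dom W xt p q)).

Definition yplus (R : realFieldType) (xh : pfun) (c : V -> V -> R)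
  : V -> V -> bool :=
  fun p q => match xh p q with Some b => b | None => 0 <= c p q end.

Inductive tau_kind := TOut | TIn | TBd.

Definition delta (U : {set V}) (p q : V) : bool :=
  ((p \in U) && (q \notin U)) || ((p \notin U) && (q \in U)).

Definition tau (k : tau_kind) (U : {set V}) (y x : V -> V -> bool)
  (p q : V) : bool :=
  if (p \in U) && (q \in U) then y p q
  else if (p \notin U) && (q \notin U) then x p q
  else match k with
  | TOut => if (p \notin U) && (q \in U) then
              [exists r in U, xv x p r && xv y r q] else false
  | TIn => if (p \in U) && (q \notin U) then
              [exists r in U, xv y p r && xv x r q] else false
  | TBd => false
  end.

Definition P01 (k : tau_kind) (U : {set V}) (y : V -> V -> bool) (xh : pfun)
  (p q : V) : bool :=
  match k with
  | TOut => [&& p \notin U, q \in U,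
               [exists r in U, (xh p r != Some false) && xv y r q]
             & xh p q != Some true]
  | TIn => [&& p \in U, q \notin U,
               [exists r in U, xv y p r && (xh r q != Some false)]
             & xh p q != Some true]
  | TBd => false
  end.

Definition P10 (k : tau_kind) (U : {set V}) (xh : pfun) (p q : V) : bool :=
  match k with
  | TOut => [&& p \in U, q \notin U & xh p q != Some false]
  | TIn => [&& p \notin U, q \in U & xh p q != Some false]
  | TBd => delta U p q && (xh p q != Some false)
  end.

Definition negp (R : realFieldType) (a : R) : R := Num.max (- a) 0.
Definition posp (R : realFieldType) (a : R) : R := Num.max a 0.
End Defs.

(* Main.v *)
Require Import Defs.
From mathcomp Require Import all_boot all_order all_algebra.
Set Implicit Arguments. Unset Strict Implicit.
From mathcomp Require Import lra.
Import Order.TTheory GRing.Theory Num.Theory.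
Local Open Scope ring_scope.

Lemma negp_ge0 (R : realFieldType) (a : R) : 0 <= negp a.
Proof. by rewrite /negp le_max lexx orbT. Qed.
Lemma posp_ge0 (R : realFieldType) (a : R) : 0 <= posp a.
Proof. by rewrite /posp le_max lexx orbT. Qed.
Lemma negp_ge (R : realFieldType) (a : R) : - a <= negp a.
Proof. by rewrite /negp le_max lexx. Qed.
Lemma posp_ge (R : realFieldType) (a : R) : a <= posp a.
Proof. by rewrite /posp le_max lexx. Qed.

Lemma pointwise (R : realFieldType) (V : finType) (c : V -> V -> R)
  (xh : pfun V) (U : {set V}) (k : tau_kind) (y x : V -> V -> bool) p q :
  agree [set: V] xh x ->
  (if delta U p q then c p q * ((x p q : nat)%:R - (tau k U y x p q : nat)%:R) else 0)
  <= (if P01 k U y xh p q then negp (c p q) else 0)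
   + (if P10 k U xh p q then posp (c p q) else 0).
Proof.
move=> ag.
have ag' : forall b, p != q -> xh p q = Some b -> x p q = b.
  by move=> b npq; apply: ag; rewrite ?in_setT.
have hn := negp_ge0 (c p q); have hp := posp_ge0 (c p q).
have hn' := negp_ge (c p q); have hp' := posp_ge (c p q).
have agF : forall a b, a != b -> x a b -> xh a b != Some false.
  move=> a b nab xab; apply/eqP=> /ag; rewrite !in_setT xab => /(_ isT isT nab) //.
case: k; rewrite /delta /tau /P01 /P10; case Hp: (p \in U); case Hq: (q \in U) => //=;
  rewrite ?subrr ?mulr0 ?subr0 ?mulr1; try by (repeat case: ifP => _); lra.
all: have npq : p != q by apply/eqP=> E; rewrite E ?Hq in Hp.
- rewrite add0r; case: (xh p q =P Some false) => [E|_] /=.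
    by rewrite (ag' _ npq E) mulr0 lexx.
  by case: (x p q) => /=; rewrite ?mulr1 ?mulr0 //; lra.
- case Ex: (x p q).
    have -> : [exists r in U, xv x p r && xv y r q].
      by apply/existsP; exists q; rewrite Hq /xv Ex eqxx !orbT.
    by rewrite subrr mulr0 addr0; case: ifP => _; lra.
  case: existsP => [[r /andP[rU /andP[h1 h2]]]|_]; last first.
    by rewrite subrr mulr0 addr0; case: ifP => _; lra.
  have npr : p != r by apply/eqP=> E; rewrite E rU in Hp.
  have {}h1 : x p r by move: h1; rewrite /xv (negbTE npr).
  rewrite ifT; last first.
    apply/andP; split; last by apply/eqP => /(ag' _ npq); rewrite Ex.
    by apply/existsP; exists r; rewrite rU h2 agF.
  rewrite /= addr0; lra.
- case Ex: (x p q).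
    have -> : [exists r in U, xv y p r && xv x r q].
      by apply/existsP; exists p; rewrite Hp /xv Ex eqxx !orbT.
    by rewrite subrr mulr0 addr0; case: ifP => _; lra.
  case: existsP => [[r /andP[rU /andP[h1 h2]]]|_]; last first.
    by rewrite subrr mulr0 addr0; case: ifP => _; lra.
  have nrq : r != q by apply/eqP=> E; rewrite -E rU in Hq.
  have {}h2 : x r q by move: h2; rewrite /xv (negbTE nrq).
  rewrite ifT; last first.
    apply/andP; split; last by apply/eqP => /(ag' _ npq); rewrite Ex.
    by apply/existsP; exists r; rewrite rU h1 agF.
  rewrite /= addr0; lra.
- rewrite add0r; case: (xh p q =P Some false) => [E|_] /=.
    by rewrite (ag' _ npq E) mulr0 lexx.
  by case: (x p q) => /=; rewrite ?mulr1 ?mulr0 //; lra.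
- rewrite /delta Hp Hq /= add0r; case: (xh p q =P Some false) => [E|_] /=.
    by rewrite (ag' _ npq E) mulr0 lexx.
  by case: (x p q) => /=; rewrite ?mulr1 ?mulr0 //; lra.
- rewrite /delta Hp Hq /= add0r; case: (xh p q =P Some false) => [E|_] /=.
    by rewrite (ag' _ npq E) mulr0 lexx.
  by case: (x p q) => /=; rewrite ?mulr1 ?mulr0 //; lra.
Qed.

Theorem corollary7p6 (R : realFieldType) (V : finType) (c : V -> V -> R)
  (xh : pfun V) (U : {set V}) (i j : V) (k : tau_kind) :
  (0 < #|V|)%N ->
  max_specific [set: V] xh ->
  i != j -> xh i j = None ->
  inXt U xh (yplus xh c) ->
  forall x : V -> V -> bool, inXt [set: V] xh x ->
    \sum_(pq : V * V | delta U pq.1 pq.2)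
        c pq.1 pq.2 * ((x pq.1 pq.2 : nat)%:R
                       - (tau k U (yplus xh c) x pq.1 pq.2 : nat)%:R)
    <= \sum_(pq : V * V | P01 k U (yplus xh c) xh pq.1 pq.2) negp (c pq.1 pq.2)
     + \sum_(pq : V * V | P10 k U xh pq.1 pq.2) posp (c pq.1 pq.2).

Proof.
move=> _ _ _ _ _ x [_ ag].
rewrite big_mkcond /= [X in _ <= X + _]big_mkcond [X in _ <= _ + X]big_mkcond -big_split /=.
apply: ler_sum => -[p q] _ /=.
exact: pointwise.
Qed.
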